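(* Let $\{W_n\}_{n\ge0}$ be a monic polynomial sequence and write, for $n\ge0$, $$W_{3n}(x)=P_n(x^3)+xa^1_{n-1}(x^3)+x^2a^2_{n-1}(x^3),$$ $$W_{3n+1}(x)=b^1_n(x^3)+xQ_n(x^3)+x^2b^2_{n-1}(x^3),$$ $$W_{3n+2}(x)=c^1_n(x^3)+xc^2_n(x^3)+x^2R_n(x^3),$$ with the component polynomials as described in the context. Then $\{W_n\}$ is an Appell sequence (i.e. $W_n'(x)=nW_{n-1}(x)$ for $n\ge1$) if and only if, for all $n\ge0$: $(I+3xD)Q_n=(3n+1)P_n$, $(2I+3xD)b^2_{n-1}=(3n+1)a^1_{n-1}$, $3Db^1_n=(3n+1)a^2_{n-1}$, $(I+3xD)c^2_n=(3n+2)b^1_n$, $(2I+3xD)R_n=(3n+2)Q_n$, $3Dc^1_n=(3n+2)b^2_{n-1}$, $(I+3xD)a^1_n=(3n+3)c^1_n$, $(2I+3xD)a^2_n=(3n+3)c^2_n$, $3DP_{n+1}=(3n+3)R_n$.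
   Context: $\mathcal{P}$ is the space of complex polynomials; $I$ is the identity, $D$ the derivative, $x$ multiplication by $x$. A monic polynomial sequence (MPS) is a sequence $\{W_n\}_{n\ge0}$ with $W_n$ monic of degree $n$. Cubic decomposition (CD): for any MPS $\{W_n\}$ there are unique polynomials such that the three displayed identities hold, where $\{P_n\},\{Q_n\},\{R_n\}$ are MPSs (principal components) and the secondary components satisfy $\deg a^1_{n-1}\le n-1$, $\deg a^2_{n-1}\le n-1$, $\deg b^1_n\le n$, $\deg b^2_{n-1}\le n-1$, $\deg c^1_n\le n$, $\deg c^2_n\le n$, with $a^1_{-1}=a^2_{-1}=b^2_{-1}=0$. An MPS $\{W_n\}$ is Appell if $DW_{n+1}=(n+1)W_n$ for all $n\ge0$. *)

(* Defs.v *)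
From HB Require Import structures.
From mathcomp Require Import all_boot all_order all_algebra.
From mathcomp Require Import reals complex.
Set Implicit Arguments. Unset Strict Implicit. Unset Printing Implicit Defensive.
Import GRing.Theory Num.Theory.
Local Open Scope ring_scope.

(* shifted index: [pre f n] stands for f_{n-1}, with f_{-1} = 0 *)
Definition pre (K : nzRingType) (f : nat -> {poly K}) (n : nat) : {poly K} :=
  if n is n'.+1 then f n' else 0.

Definition MPS (K : nzRingType) (W : nat -> {poly K}) : Prop :=
  forall n, W n \is monic /\ size (W n) = n.+1.

Definition Appell (K : nzRingType) (W : nat -> {poly K}) : Prop :=
  forall n, (W n.+1)^`() = (n.+1)%:R *: W n.

(* The cubic decomposition of W with components P Q R (principal) and
   a1 a2 b1 b2 c1 c2 (secondary), where a1 n, a2 n, b2 n stand for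
   a^1_n, a^2_n, b^2_n (n >= 0), the index -1 value being 0 (see [pre]). *)
Definition cube_comp (K : nzRingType) (p : {poly K}) : {poly K} :=
  comp_poly ('X^3) p.

Definition cubic_decomposition (K : nzRingType) (W P Q R a1 a2 b1 b2 c1 c2 : nat -> {poly K}) : Prop :=
  [/\ [/\ MPS P, MPS Q & MPS R],
      (forall n, [/\ (size (a1 n) <= n.+1)%N, (size (a2 n) <= n.+1)%N & (size (b2 n) <= n.+1)%N]),
      (forall n, [/\ (size (b1 n) <= n.+1)%N, (size (c1 n) <= n.+1)%N & (size (c2 n) <= n.+1)%N]) &
      (forall n,
        [/\ W (3 * n)%N = cube_comp (P n) + 'X * cube_comp (pre a1 n) + 'X^2 * cube_comp (pre a2 n),
            W (3 * n).+1 = cube_comp (b1 n) + 'X * cube_comp (Q n) + 'X^2 * cube_comp (pre b2 n) &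
            W (3 * n).+2 = cube_comp (c1 n) + 'X * cube_comp (c2 n) + 'X^2 * cube_comp (R n)])].

(* Main.v *)
Require Import Defs.
From HB Require Import structures.
From mathcomp Require Import all_boot all_order all_algebra.
From mathcomp Require Import reals complex.
From mathcomp Require Import ring zify.
Import GRing.Theory Num.Theory.
Local Open Scope ring_scope.

Section S.
Variable K : comNzRingType.
Implicit Types p q r : {poly K}.
Local Notation m := (@cube_comp K).
Definition S3 (p q r : {poly K}) := m p + 'X * m q + 'X^2 * m r.

Lemma coef_m p i : (m p)`_i = if (3 %| i)%N then p`_(i %/ 3) else 0.
Proof. by rewrite /cube_comp coef_comp_poly_Xn. Qed.

Lemma coefS0 p q r i : (S3 p q r)`_(3 * i) = p`_i.
Proof.
rewrite /S3 !coefD coefXM coefXnM !coef_m.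
rewrite dvdn_mulr // mulKn //.
case: i => [|i]; first by rewrite /= ?addr0 ?add0r.
have -> : (3 * i.+1 == 0)%N = false by lia.
have -> : (3 * i.+1 < 2)%N = false by lia.
have -> : (3 %| (3 * i.+1).-1)%N = false.
  apply/negbTE/negP => /dvdnP [k Hk]; lia.
have -> : (3 %| (3 * i.+1 - 2))%N = false.
  apply/negbTE/negP => /dvdnP [k Hk]; lia.
by rewrite !addr0.
Qed.

Lemma coefS1 p q r i : (S3 p q r)`_(3 * i + 1) = q`_i.
Proof.
rewrite /S3 !coefD coefXM coefXnM !coef_m.
have -> : (3 %| (3 * i + 1))%N = false.
  apply/negbTE/negP => /dvdnP [k Hk]; lia.
have -> : (3 * i + 1 == 0)%N = false by lia.
have -> : ((3 * i + 1).-1 = 3 * i)%N by lia.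
rewrite dvdn_mulr // mulKn //.
case: i => [|i]; first by rewrite /= ?addr0 ?add0r.
have -> : (3 * i.+1 + 1 < 2)%N = false by lia.
have -> : (3 %| (3 * i.+1 + 1 - 2))%N = false.
  apply/negbTE/negP => /dvdnP [k Hk]; lia.
by rewrite addr0 add0r.
Qed.

Lemma coefS2 p q r i : (S3 p q r)`_(3 * i + 2) = r`_i.
Proof.
rewrite /S3 !coefD coefXM coefXnM !coef_m.
have -> : (3 %| (3 * i + 2))%N = false.
  apply/negbTE/negP => /dvdnP [k Hk]; lia.
have -> : (3 * i + 2 == 0)%N = false by lia.
have -> : (3 %| (3 * i + 2).-1)%N = false.
  apply/negbTE/negP => /dvdnP [k Hk]; lia.
have -> : (3 * i + 2 < 2)%N = false by lia.
have -> : (3 * i + 2 - 2 = 3 * i)%N by lia.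
rewrite dvdn_mulr // mulKn //. by rewrite ?add0r ?addr0.
Qed.

Lemma S3_inj p q r p' q' r' : S3 p q r = S3 p' q' r' -> [/\ p = p', q = q' & r = r'].
Proof.
move=> E; split; apply/polyP => i.
- by rewrite -(coefS0 p q r) E coefS0.
- by rewrite -(coefS1 p q r) E coefS1.
- by rewrite -(coefS2 p q r) E coefS2.
Qed.

Lemma S3Z c p q r : c *: S3 p q r = S3 (c *: p) (c *: q) (c *: r).
Proof.
by rewrite /S3 /cube_comp !comp_polyZ !scalerDr !scalerAl -!scalerAr !scalerAl.
Qed.

Lemma m_deriv p : (m p)^`() = m (p^`()) * (3%:R * 'X^2).
Proof. by rewrite /cube_comp deriv_comp derivXn -mulr_natl. Qed.

Lemma mX p : m ('X * p) = 'X^3 * m p.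
Proof. by rewrite /cube_comp comp_polyM comp_polyX. Qed.

Lemma S3_deriv p q r : (S3 p q r)^`() =
  S3 (q + 3%:R *: ('X * q^`())) (2%:R *: r + 3%:R *: ('X * r^`())) (3%:R *: p^`()).
Proof.
rewrite /S3 !derivD !derivM !m_deriv derivX.
rewrite /cube_comp !comp_polyD !comp_polyZ !comp_polyM !comp_polyX.
rewrite -!mul_polyC !polyC_natr.
ring.
Qed.

Lemma keyS p q r p' q' r' (c : K) :
  (S3 p q r)^`() = c *: S3 p' q' r' <->
  [/\ q + 3%:R *: ('X * q^`()) = c *: p',
      2%:R *: r + 3%:R *: ('X * r^`()) = c *: q' &
      3%:R *: p^`() = c *: r'].
Proof.
rewrite S3_deriv S3Z; split; first by move/S3_inj.
by case=> -> -> ->.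
Qed.
End S.

Local Open Scope complex_scope.

Theorem proposition6 (R : realType) (W P Q Rc a1 a2 b1 b2 c1 c2 : nat -> {poly R[i]}) :
  MPS W ->
  cubic_decomposition W P Q Rc a1 a2 b1 b2 c1 c2 ->
  Appell W <->
  (forall n : nat,
    [/\ [/\ Q n + 3%:R *: ('X * (Q n)^`()) = (3 * n + 1)%N%:R *: P n,
        2%:R *: pre b2 n + 3%:R *: ('X * (pre b2 n)^`()) = (3 * n + 1)%N%:R *: pre a1 n &
        3%:R *: (b1 n)^`() = (3 * n + 1)%N%:R *: pre a2 n],
        [/\ c2 n + 3%:R *: ('X * (c2 n)^`()) = (3 * n + 2)%N%:R *: b1 n,
        2%:R *: Rc n + 3%:R *: ('X * (Rc n)^`()) = (3 * n + 2)%N%:R *: Q n &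
        3%:R *: (c1 n)^`() = (3 * n + 2)%N%:R *: pre b2 n] &
        [/\ a1 n + 3%:R *: ('X * (a1 n)^`()) = (3 * n + 3)%N%:R *: c1 n,
        2%:R *: a2 n + 3%:R *: ('X * (a2 n)^`()) = (3 * n + 3)%N%:R *: c2 n &
        3%:R *: (P n.+1)^`() = (3 * n + 3)%N%:R *: Rc n]]).
Proof.
move=> _ [_ _ _ D].
have E1 n : (W (3 * n).+1)^`() = (3 * n).+1%:R *: W (3 * n) <->
   [/\ Q n + 3%:R *: ('X * (Q n)^`()) = (3 * n + 1)%N%:R *: P n,
        2%:R *: pre b2 n + 3%:R *: ('X * (pre b2 n)^`()) = (3 * n + 1)%N%:R *: pre a1 n &
        3%:R *: (b1 n)^`() = (3 * n + 1)%N%:R *: pre a2 n].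
  case: (D n) => -> -> _; rewrite addn1.
  exact: (@keyS _ (b1 n) (Q n) (pre b2 n) (P n) (pre a1 n) (pre a2 n)).
have E2 n : (W (3 * n).+2)^`() = (3 * n).+2%:R *: W (3 * n).+1 <->
   [/\ c2 n + 3%:R *: ('X * (c2 n)^`()) = (3 * n + 2)%N%:R *: b1 n,
        2%:R *: Rc n + 3%:R *: ('X * (Rc n)^`()) = (3 * n + 2)%N%:R *: Q n &
        3%:R *: (c1 n)^`() = (3 * n + 2)%N%:R *: pre b2 n].
  case: (D n) => _ -> ->; rewrite addn2.
  exact: (@keyS _ (c1 n) (c2 n) (Rc n) (b1 n) (Q n) (pre b2 n)).
have E3 n : (W (3 * n).+3)^`() = (3 * n).+3%:R *: W (3 * n).+2 <->
   [/\ a1 n + 3%:R *: ('X * (a1 n)^`()) = (3 * n + 3)%N%:R *: c1 n,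
        2%:R *: a2 n + 3%:R *: ('X * (a2 n)^`()) = (3 * n + 3)%N%:R *: c2 n &
        3%:R *: (P n.+1)^`() = (3 * n + 3)%N%:R *: Rc n].
  have -> : ((3 * n).+3 = 3 * n.+1)%N by lia.
  case: (D n) => _ _ ->; case: (D n.+1) => -> _ _.
  have -> : (3 * n.+1 = 3 * n + 3)%N by lia.
  exact: (@keyS _ (P n.+1) (a1 n) (a2 n) (c1 n) (c2 n) (Rc n)).
split.
- move=> A n; split.
  + by apply/E1; apply: A.
  + by apply/E2; apply: A.
  + by apply/E3; apply: A.
- move=> H m.
  have [k [-> | [-> | ->]]] : exists k : nat, m = (3 * k)%N \/ m = (3 * k).+1 \/ m = (3 * k).+2 by exists (m %/ 3)%N; lia.
  + by apply/E1; case: (H k).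
  + by apply/E2; case: (H k).
  + by apply/E3; case: (H k).
Qed.
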